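(* Let $G$ be a finite group, $n\ge 1$, and let $F$ be a $2$-starter under $G$ with $G$-stabilizer $S$. Let $H$ be the subgraph of $K_{\overline{G\times\mathbb{Z}_n}}$ with edge set $$\{[\infty,(x,k)] : x\sim\infty \text{ in } F,\ k\in\mathbb{Z}_n\}\ \cup\ \{[(x,k),(x,r)] : x\sim\infty \text{ in } F,\ k,r\in\mathbb{Z}_n,\ k\neq r\}\ \cup\ \{[(x,k),(y,r)] : x\sim y \text{ in } F,\ x,y\in G,\ k,r\in\mathbb{Z}_n\}.$$ Then $H$ is a $2n$-factor of $K_{\overline{G\times\mathbb{Z}_n}}$, its $(G\times\mathbb{Z}_n)$-stabilizer is exactly $S\times\mathbb{Z}_n$, and $H$ is a $2n$-starter under $G\times\mathbb{Z}_n$.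
   Context: For a finite group $G$, $\overline{G}=G\cup\{\infty\}$, and $K_V$ denotes the complete graph on vertex set $V$; $u\sim v$ means $u$ is adjacent to $v$, and $[u,v]$ denotes an edge. $G$ acts on $\overline{G}$ by right multiplication, with $\infty g=\infty$; for a subgraph $F$ of $K_{\overline{G}}$ and $g\in G$, $Fg$ is the graph obtained by replacing every vertex $v$ by $vg$, and the $G$-stabilizer of $F$ is $\{g\in G: Fg=F\}$. A $k$-factor of $K_V$ is a spanning $k$-regular subgraph. For a graph $\Gamma$ with vertex set $\overline{G}$, its list of differences is the multiset $\Delta\Gamma=\{ab^{-1},\ ba^{-1} : [a,b]\in E(\Gamma),\ a\neq\infty\neq b\}$. Given a finite group $G$ with $k$ dividing $|G|$, a $k$-factor $F$ of $K_{\overline{G}}$ is a $k$-starter under $G$ if (1) the $G$-stabilizer of $F$ has order $k$, and (2) $\Delta F$ contains every element of $G\setminus\{1_G\}$. In $G\times\mathbb{Z}_n$ the group operation is $(g,i)(h,j)=(gh,i+j)$, and $G\times \mathbb{Z}_n$ acts on $\overline{G\times\mathbb{Z}_n}$ by right multiplication fixing $\infty$. *)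

(* Defs.v *)
From HB Require Import structures.
From mathcomp Require Import all_boot all_order all_algebra all_fingroup.
Set Implicit Arguments. Unset Strict Implicit. Unset Printing Implicit Defensive.
Local Open Scope group_scope.

(* Vertex set  \overline{G} = G ∪ {∞}, with ∞ := None. *)
Notation ext gT := (option gT).
Notation inf := (@None _).

Definition ract (gT : finGroupType) (v : ext gT) (g : gT) : ext gT :=
  omap (fun x => x * g) v.

(* A graph with vertex set V (subgraph of K_V) is given by its adjacency
   relation; it is a simple graph when symmetric and irreflexive. *)
Definition simple_graph (V : finType) (E : rel V) : Prop :=
  (forall u v, E u v = E v u) /\ (forall u, ~~ E u u).

Definition is_factor (V : finType) (k : nat) (E : rel V) : Prop :=
  simple_graph E /\ forall u, #|[set v | E u v]| = k.

(* Fg : vertices v replaced by vg; so [u,v] is an edge of Fg iff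
   [u g^-1, v g^-1] is an edge of F. *)
Definition gtrans (gT : finGroupType) (F : rel (ext gT)) (g : gT) : rel (ext gT) :=
  fun u v => F (ract u g^-1) (ract v g^-1).

Definition stab (gT : finGroupType) (F : rel (ext gT)) : {set gT} :=
  [set g | [forall u, forall v, gtrans F g u v == F u v]].

Definition in_diffs (gT : finGroupType) (F : rel (ext gT)) (g : gT) : Prop :=
  exists a b : gT, F (Some a) (Some b) /\ (g = a * b^-1 \/ g = b * a^-1).

(* k-starter under G (with the standing hypothesis k | |G|). *)
Definition starter (gT : finGroupType) (k : nat) (F : rel (ext gT)) : Prop :=
  [/\ (k %| #|[set: gT]|)%N, is_factor k F, #|stab F| = k
    & forall g : gT, g != 1 -> in_diffs F g].

(* Z_n for n >= 1, as the additive cyclic group 'I_n (n = n.-1.+1). *)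
Notation Zn n := ('I_n.-1.+1) (only parsing).

(* The graph H on \overline{G × Z_n}: symmetric closure of the listed edges. *)
Definition Hbase (gT : finGroupType) (n : nat) (F : rel (ext gT))
  : rel (ext (gT * Zn n)) :=
  fun u v =>
  match u, v with
  | None, Some (x, _) => F (Some x) inf
  | Some (x, k), Some (y, r) =>
      [&& x == y, F (Some x) inf & k != r] || F (Some x) (Some y)
  | _, _ => false
  end.

Arguments Hbase {gT} n F _ _.

Definition Hgraph (gT : finGroupType) (n : nat) (F : rel (ext gT))
  : rel (ext (gT * Zn n)) :=
  fun u v => Hbase n F u v || Hbase n F v u.
Arguments Hgraph {gT} n F _ _.

(* Main.v *)
Require Import Defs.
From HB Require Import structures.
From mathcomp Require Import all_boot all_order all_algebra all_fingroup.
From mathcomp Require Import zify.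

Lemma sum_opt (T : finType) (f : option T -> nat) :
  \sum_v f v = f None + \sum_x f (Some x).
Proof.
rewrite (bigD1 None) //=; congr (_ + _).
rewrite (reindex_omap Some id) //=; last by case.
by apply: eq_bigl => x; rewrite eqxx.
Qed.

Lemma sum_pair (I J : finType) (f : I * J -> nat) :
  \sum_p f p = \sum_i \sum_j f (i, j).
Proof. by rewrite pair_big; apply: eq_bigr => -[]. Qed.

Lemma cardP (T : finType) (P : pred T) :
  #|[set v | P v]| = \sum_v (P v : nat).
Proof.
rewrite -sum1dep_card big_mkcond /=; apply: eq_bigr => v _; by case: (P v).
Qed.

Lemma ract_pair (gT : finGroupType) m (y g : gT) (r k : 'I_m.+1) :
  Defs.ract (Some (y, r)) (((g, k) : gT * 'I_m.+1)^-1)%g = Some ((y * g^-1)%g, (r * k^-1)%g).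
Proof. by []. Qed.

Lemma neq_sum m (k : 'I_m.+1) : \sum_r ((k != r) : nat) = m.
Proof.
rewrite -cardP.
have -> : [set r | k != r] = [set~ k] by apply/setP => r; rewrite !inE eq_sym.
by rewrite cardsC1 card_ord.
Qed.

Lemma pairM (g1 g2 : finGroupType) (a c : g1) (b d : g2) :
  (((a, b) : g1 * g2) * (c, d))%g = ((a * c)%g, (b * d)%g).
Proof. by []. Qed.
Lemma pairV (g1 g2 : finGroupType) (a : g1) (b : g2) :
  (((a, b) : g1 * g2)^-1)%g = (a^-1, b^-1)%g.
Proof. by []. Qed.

Section H.
Variables (gT : finGroupType) (m : nat) (F : rel (option gT)).
Hypothesis Fsym : forall u v, F u v = F v u.
Hypothesis Firr : forall u, ~~ F u u.

Lemma HNS y r : Hgraph m.+1 F None (Some (y, r)) = F (Some y) None.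
Proof. by rewrite /Hgraph /= orbF. Qed.

Lemma HSN y r : Hgraph m.+1 F (Some (y, r)) None = F (Some y) None.
Proof. by rewrite /Hgraph /=. Qed.

Lemma HSS x y (k r : 'I_m.+1) : Hgraph m.+1 F (Some (x, k)) (Some (y, r)) =
   [&& x == y, F (Some x) None & k != r] || F (Some x) (Some y).
Proof.
rewrite /Hgraph /= (Fsym (Some y) (Some x)).
case: (x =P y) => [<-|] /=.
  by rewrite (negbTE (Firr _)) !orbF eqxx /= eq_sym orbb.
move/eqP; rewrite eq_sym => /negbTE ->; by rewrite /= orbb.
Qed.
End H.

Theorem mainTheorem7 (gT : finGroupType) (n : nat) (hn : (0 < n)%N)
  (F : rel (option gT)) (hF : starter 2 F) :
  [/\ is_factor (2 * n) (Hgraph n F),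
      stab (Hgraph n F) = setX (stab F) [set: 'I_n.-1.+1]
    & starter (2 * n) (Hgraph n F)].
Proof.
case: n hn => // m _.
case: hF => h2G [[Fsym Firr] Fdeg] Fstab Fdiff.
have Ffalse u : F u u = false by apply/negbTE.
have sym : forall u v, Hgraph m.+1 F u v = Hgraph m.+1 F v u.
  by move=> u v; rewrite /Hgraph orbC.
have irr : forall u, ~~ Hgraph m.+1 F u u.
  case=> [[x k]|]; last by [].
  by rewrite HSS // eqxx Ffalse orbF /= eqxx andbF.
have fact : is_factor (2 * m.+1) (Hgraph m.+1 F).
  split; first by split; [exact: sym | exact: irr].
  have HNN : Hgraph m.+1 F None None = false by [].
  case=> [[x k]|].
  - have degS : F (Some x) None + \sum_y F (Some x) (Some y) = 2.
      by rewrite -(Fdeg (Some x)) cardP sum_opt.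
    rewrite (bigD1 x) //= Ffalse add0n in degS.
    rewrite cardP sum_opt sum_pair HSN.
    under eq_bigr => y _ do under eq_bigr => r _ do rewrite HSS //.
    rewrite (bigD1 x) //= Ffalse.
    under eq_bigr => r _ do rewrite eqxx orbF /=.
    under [X in _ + (_ + X)]eq_bigr => y /negbTE hy do
      under eq_bigr => r _ do rewrite eq_sym hy /=.
    under [X in _ + (_ + X)]eq_bigr => y _ do rewrite sum_nat_const card_ord.
    rewrite -big_distrr /=.
    case: (F (Some x) None) degS => /= degS.
      rewrite neq_sum; lia.
    rewrite big1 //; lia.
  - have degN : \sum_y (F (Some y) None : nat) = 2.
      have := Fdeg None; rewrite cardP sum_opt Ffalse add0n => <-.
      by apply: eq_bigr => y _; rewrite Fsym.
    rewrite cardP sum_opt sum_pair HNN add0n.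
    under eq_bigr => y _ do under eq_bigr => r _ do rewrite HNS.
    under eq_bigr => y _ do rewrite sum_nat_const card_ord.
    by rewrite -big_distrr /= degN mulnC.
have stabE : stab (Hgraph m.+1 F) = setX (stab F) [set: 'I_m.+1].
  apply/setP => -[g k]; rewrite in_setX !inE andbT.
  apply/forallP/forallP => H.
  - move=> u; apply/forallP => v; apply/eqP.
    case: u => [x|]; case: v => [y|]; rewrite /gtrans /=.
    + have := eqP (forallP (H (Some (x,k))) (Some (y,k))).
      by rewrite /gtrans ract_pair ract_pair !HSS // !eqxx !andbF /=.
    + have := eqP (forallP (H (Some (x,k))) None).
      by rewrite /gtrans ract_pair !HSN.
    + have := eqP (forallP (H None) (Some (y,k))).
      by rewrite /gtrans ract_pair !HNS // (Fsym inf) (Fsym inf).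
    + by rewrite Ffalse.
  - have HF u v := eqP (forallP (H u) v).
    move=> u; apply/forallP => v; apply/eqP.
    case: u => [[x r]|]; case: v => [[y s]|]; rewrite /gtrans.
    + rewrite ract_pair ract_pair !HSS // (inj_eq (mulIg _)) (inj_eq (mulIg _)).
      have := HF (Some x) None; have := HF (Some x) (Some y).
      by rewrite /gtrans /= => -> ->.
    + rewrite ract_pair !HSN //.
      by have := HF (Some x) None; rewrite /gtrans /=.
    + rewrite ract_pair !HNS //.
      by have := HF (Some y) None; rewrite /gtrans /=.
    + by [].
split => //; split => //.
- rewrite cardsT in h2G; by rewrite cardsT card_prod card_ord dvdn_mul.
- by rewrite stabE cardsX Fstab cardsT card_ord.
- move=> [g k] hne.
  case: (eqVneq g 1%g) => [eg|hg].
  + subst g.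
    have hk : k != 1%g by apply: contraNneq hne => ->.
    have : (0 < #|[set v | F None v]|)%N by rewrite Fdeg.
    case/card_gt0P => -[x|]; rewrite inE => hx; last by rewrite Ffalse in hx.
    exists (x, k), (x, 1%g); split.
      by rewrite HSS // eqxx Fsym hx hk.
    by left; rewrite pairM /= mulgV invg1 mulg1.
  + case: (Fdiff g hg) => a [b [hab [->|->]]].
    * exists (a, k), (b, 1%g); split; first by rewrite HSS // hab orbT.
      by left; rewrite pairM /= invg1 mulg1.
    * exists (a, 1%g), (b, k); split; first by rewrite HSS // hab orbT.
      by right; rewrite pairM /= invg1 mulg1.
Qed.
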